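(* Let $\mathbb O=\{-m,\dots,0,\dots,M\}$ with integers $m,M\ge1$, and $\theta=0$. For every $x(0)\in\mathbb O^n$: if there exists a finite legal update sequence from $x(0)$ without crossing updates along which the trajectory reaches the consensus state $(0,\dots,0)$, then there exists a finite legal update sequence from $x(0)$ without crossing updates along which the system reaches a state $y$ (not necessarily an equilibrium) with $y_i=-1$ for every $i$ with $x_i(0)<0$ and $y_i=1$ for every $i$ with $x_i(0)>0$.
   Context: Let $n\ge1$, $\mathcal V=\{1,\dots,n\}$, and let $W=(w_{ij})$ be an $n\times n$ row-stochastic matrix. For $x\in\mathbb O^n$, $i\in\mathcal V$, $z\in\mathbb O$, define $C^i_{\mathrm{social}}(z;x)=\sum_{j=1}^n w_{ij}|z-x_j|$ and $P_i(x)=\{z\in\mathbb O: C^i_{\mathrm{social}}(z;x)\le C^i_{\mathrm{social}}(x_i;x),\ |z-\theta|\le |x_i-\theta|\}$. A legal update sequence from $x(0)$ is a finite sequence $(i_1,z_1),\dots,(i_T,z_T)$ with $i_t\in\mathcal V$, generating $x(1),\dots,x(T)$ where $x(t)$ is obtained from $x(t-1)$ by setting coordinate $i_t$ to $z_t$, such that $z_t\in P_{i_t}(x(t-1))$ for every $t$. The update at step $t$ is a crossing update if $(x_{i_t}(t)-\theta)(x_{i_t}(t-1)-\theta)<0$. *)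

(* Defs.v *)
From mathcomp Require Import all_boot all_order all_algebra.
Set Implicit Arguments. Unset Strict Implicit. Unset Printing Implicit Defensive.
Import Order.TTheory GRing.Theory Num.Theory.
Local Open Scope ring_scope.

Definition inO (m M : nat) (z : int) : bool := (- (m%:Z) <= z) && (z <= M%:Z).

Definition state (n : nat) := 'I_n -> int.

Definition row_stochastic (R : numDomainType) (n : nat) (W : 'M[R]_n) : Prop :=
  (forall i j, 0 <= W i j) /\ (forall i, \sum_(j < n) W i j = 1).

Definition C_social (R : numDomainType) (n : nat) (W : 'M[R]_n)
    (i : 'I_n) (z : int) (x : state n) : R :=
  \sum_(j < n) W i j * (`|z - x j|%:~R).

Definition inP (R : numDomainType) (m M : nat) (theta : int) (n : nat)
    (W : 'M[R]_n) (x : state n) (i : 'I_n) (z : int) : Prop :=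
  [/\ inO m M z,
      C_social W i z x <= C_social W i (x i) x
    & `|z - theta| <= `|x i - theta|].

Definition upd (n : nat) (x : state n) (i : 'I_n) (z : int) : state n :=
  fun j => if j == i then z else x j.

Definition crossing (theta : int) (n : nat) (x : state n) (i : 'I_n) (z : int) : Prop :=
  (z - theta) * (x i - theta) < 0.

Fixpoint legal_nocross (R : numDomainType) (m M : nat) (theta : int) (n : nat)
    (W : 'M[R]_n) (x : state n) (s : seq ('I_n * int)) : Prop :=
  match s with
  | [::] => True
  | (i, z) :: s' =>
      [/\ inP m M theta W x i z, ~ crossing theta x i z
        & legal_nocross m M theta W (upd x i z) s']
  end.

Fixpoint reaches (n : nat) (x : state n) (s : seq ('I_n * int)) (Q : state n -> Prop) : Prop :=
  Q x \/ match s with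
         | [::] => False
         | (i, z) :: s' => reaches (upd x i z) s' Q
         end.

(* Main.v *)
Require Import Defs.
From mathcomp Require Import all_boot all_order all_algebra.
From mathcomp Require Import zify ring lra.
Import Order.TTheory GRing.Theory Num.Theory.
Local Open Scope ring_scope.

Definition Rel (c c' : int) : Prop := c' = c \/ (c = 0 /\ -1 <= c' <= 1).

Lemma F1 (a b c c' : int) : Rel c c' -> 1 <= a -> 1 <= b ->
  1 * (`|b - c'| - `|a - c'|) <= 1 * (`|b - c| - `|a - c|) :> int.
Proof. rewrite /Rel; lia. Qed.

Lemma F1n (a b c c' : int) : Rel c c' -> a <= -1 -> b <= -1 ->
  1 * (`|b - c'| - `|a - c'|) <= 1 * (`|b - c| - `|a - c|) :> int.
Proof. rewrite /Rel; lia. Qed.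

Lemma F2 (a c c' : int) : Rel c c' -> 1 <= a ->
  a * (`|1 - c'| - `|a - c'|) <= (a - 1) * (`|0 - c| - `|a - c|) :> int.
Proof. move=> [->|[-> H]] Ha.
- have T: `|a * (1 - c)| <= `|(a-1) * (0 - c)| + `|a - c|.
    have ->: a * (1 - c) = (a-1) * (0 - c) + (a - c) by ring.
    exact: ler_normD.
  rewrite !normrM in T. have E1: `|a| = a by lia. have E2 : `|a-1| = a - 1 by lia.
  rewrite E1 E2 in T. lia.
- have E1: `|1 - c'| = 1 - c' by lia. have E2: `|a - c'| = a - c' by lia.
  have E3: `|a - 0| = a by lia. rewrite E1 E2 E3 subr0 normr0. nia.
Qed.

Lemma F2n (a c c' : int) : Rel c c' -> a <= -1 ->
  (- a) * (`|-1 - c'| - `|a - c'|) <= (- a - 1) * (`|0 - c| - `|a - c|) :> int.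
Proof. move=> [->|[-> H]] Ha.
- have T: `|(- a) * (-1 - c)| <= `|(- a - 1) * (0 - c)| + `|a - c|.
    have ->: (- a) * (-1 - c) = (- a - 1) * (0 - c) + (a - c) by ring.
    exact: ler_normD.
  rewrite !normrM in T. have E1: `|- a| = - a by lia. have E2 : `|- a - 1| = - a - 1 by lia.
  rewrite E1 E2 in T. lia.
- have E1: `|-1 - c'| = 1 + c' by lia. have E2: `|a - c'| = c' - a by lia.
  have E3: `|a - 0| = - a by lia. rewrite E1 E2 E3 subr0 normr0. nia.
Qed.

Lemma sum_step (R : realFieldType) n (w : 'I_n -> R) (c c' : 'I_n -> int)
  (a b pa pb t s : int) :
 (forall j, 0 <= w j) -> 0 < t -> 0 <= s ->
 (forall j, t * (`|pb - c' j| - `|pa - c' j|) <= s * (`|b - c j| - `|a - c j|)) ->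
 \sum_(j < n) w j * (`|b - c j|%:~R) <= \sum_(j < n) w j * (`|a - c j|%:~R) ->
 \sum_(j < n) w j * (`|pb - c' j|%:~R) <= \sum_(j < n) w j * (`|pa - c' j|%:~R).
Proof.
move=> w0 t0 s0 H Hh.
have K : t%:~R * (\sum_(j < n) w j * (`|pb - c' j|%:~R) - \sum_(j < n) w j * (`|pa - c' j|%:~R))
   <= s%:~R * (\sum_(j < n) w j * (`|b - c j|%:~R) - \sum_(j < n) w j * (`|a - c j|%:~R)) :> R.
  rewrite -!sumrB !mulr_sumr; apply: ler_sum => j _.
  rewrite -!mulrBr !(mulrCA _ (w j)); apply: ler_wpM2l => //.
  by rewrite -!intrB -!intrM ler_int.
have K2 : s%:~R * (\sum_(j < n) w j * (`|b - c j|%:~R) - \sum_(j < n) w j * (`|a - c j|%:~R)) <= 0 :> R.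
  apply: mulr_ge0_le0; first by rewrite ler0z.
  by rewrite subr_le0.
have tR : 0 < t%:~R :> R by rewrite ltr0z.
rewrite -subr_le0.
have := le_trans K K2; rewrite pmulr_rle0 //.
Qed.

Definition sgn (v : int) : int := if 0 < v then 1 else if v < 0 then -1 else 0.
Definition phi {n} (x0 : state n) (j : 'I_n) (v : int) : int :=
  if v == 0 then sgn (x0 j) else v.
Definition Inv {n} (x0 x : state n) : Prop := forall j,
  [/\ 0 < x0 j -> 0 <= x j, x0 j < 0 -> x j <= 0 & x0 j = 0 -> x j = 0].

Lemma Rel_phi {n} (x0 : state n) j v : Rel v (phi x0 j v).
Proof. rewrite /Rel /phi /sgn; case: (eqVneq v 0) => [->|_]; last by left.
by right; split => //; case: ifP => _; [|case: ifP => _]; lia. Qed.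

Lemma step (R : realFieldType) (n m M : nat) (W : 'M[R]_n) (x0 x x' : state n) i z :
  (1 <= m)%N -> (1 <= M)%N -> row_stochastic W ->
  Inv x0 x -> (forall j, x' j = phi x0 j (x j)) ->
  inP m M 0 W x i z -> ~ crossing 0 x i z ->
  [/\ inP m M 0 W x' i (phi x0 i z), ~ crossing 0 x' i (phi x0 i z)
    & Inv x0 (upd x i z)].
Proof.
move=> m1 M1 [W0 _] Hinv Hx' [HO Hc Hn] Hcr.
rewrite /crossing !subr0 in Hcr Hn *.
have Hrel : forall j, Rel (x j) (x' j) by move=> j; rewrite Hx'; exact: Rel_phi.
have Hsa : (0 <= z * x i) by rewrite leNgt; apply/negP.
rewrite Hx'.
have [Ha1 Ha2 Ha3] := Hinv i.
have Hsame : z = x i -> [/\ inP m M 0 W x' i (phi x0 i z), ~ (phi x0 i z * phi x0 i (x i) < 0)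
    & Inv x0 (upd x i z)].
  move=> Ez; rewrite Ez; split.
  - rewrite -Hx'; split => //.
    + move: HO; rewrite Ez Hx' /phi /sgn /inO; case: eqP => // _ _.
      by case: ifP => _; [|case: ifP => _]; lia.
  - by move=> H; have := sqr_ge0 (phi x0 i (x i)); rewrite expr2; lia.
  - move=> j; rewrite /upd; case: eqP => [->|_]; exact: Hinv.
have HinvU : (0 < x0 i -> 0 <= z) -> (x0 i < 0 -> z <= 0) -> Inv x0 (upd x i z).
  move=> P1 P2 j; rewrite /upd; case: eqP => [->|_]; last exact: Hinv.
  split => // H0; move: (Ha3 H0) Hn => ->; rewrite normr0; lia.
have Hw : forall j, 0 <= W i j by move=> j; exact: W0.
move: Hc; rewrite /C_social => Hc.
have inO1 : inO m M 1 by rewrite /inO; lia.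
have inOm1 : inO m M (-1) by rewrite /inO; lia.
case: (ltrgt0P (x0 i)) => Hs.
- have a0 := Ha1 Hs.
  case: (eqVneq z (x i)) => [/Hsame//|Hne].
  have a1 : 1 <= x i by lia.
  have b0 : 0 <= z by nia.
  have ba : z <= x i by lia.
  have pa : phi x0 i (x i) = x i by rewrite /phi; case: eqP => //; lia.
  rewrite /inP (Hx' i) pa; split; last (apply: HinvU; lia).
  + case: (eqVneq z 0) => [Ez|Ez].
    * have pb : phi x0 i z = 1 by rewrite /phi Ez eqxx /sgn Hs.
      rewrite pb; split => //; last lia.
      apply: (@sum_step R n (W i) x x' (x i) z (x i) 1 (x i) (x i - 1)) => //; try lia.
      by move=> j; rewrite Ez; apply: F2.
    * have pb : phi x0 i z = z by rewrite /phi (negbTE Ez).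
      rewrite pb; split => //; last lia.
      apply: (@sum_step R n (W i) x x' (x i) z (x i) z 1 1) => //; try lia.
      by move=> j; apply: F1 => //; lia.
  + case: (eqVneq z 0) => [Ez|Ez].
    * by rewrite /phi Ez eqxx /sgn Hs; lia.
    * by rewrite /phi (negbTE Ez); nia.
- have a0 := Ha2 Hs.
  have sgm : sgn (x0 i) = -1.
    by rewrite /sgn Hs; case: ifP => // H; lia.
  case: (eqVneq z (x i)) => [/Hsame//|Hne].
  have a1 : x i <= -1 by lia.
  have b0 : z <= 0 by nia.
  have ba : x i <= z by lia.
  have pa : phi x0 i (x i) = x i by rewrite /phi; case: eqP => //; lia.
  rewrite /inP (Hx' i) pa; split; last (apply: HinvU; lia).
  + case: (eqVneq z 0) => [Ez|Ez].
    * have pb : phi x0 i z = -1 by rewrite /phi Ez eqxx sgm.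
      rewrite pb; split => //; last lia.
      apply: (@sum_step R n (W i) x x' (x i) z (x i) (-1) (- x i) (- x i - 1)) => //; try lia.
      by move=> j; rewrite Ez; apply: F2n.
    * have pb : phi x0 i z = z by rewrite /phi (negbTE Ez).
      rewrite pb; split => //; last lia.
      apply: (@sum_step R n (W i) x x' (x i) z (x i) z 1 1) => //; try lia.
      by move=> j; apply: F1n => //; lia.
  + case: (eqVneq z 0) => [Ez|Ez].
    * by rewrite /phi Ez eqxx sgm; lia.
    * by rewrite /phi (negbTE Ez); nia.
- have a0 := Ha3 Hs.
  apply: Hsame; move: Hn; rewrite a0 normr0; lia.
Qed.

Arguments step {R n m M W x0 x x' i z}.

Lemma sgn_fact n (x0 : state n) j :
  (x0 j < 0 -> sgn (x0 j) = -1) /\ (0 < x0 j -> sgn (x0 j) = 1).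
Proof. rewrite /sgn; split => H; case: ifP => ?; try case: ifP => ?; lia. Qed.

Lemma legal_pres (R : realFieldType) (n m M : nat) (W : 'M[R]_n) (x0 : state n) :
  (1 <= m)%N -> (1 <= M)%N -> row_stochastic W ->
  forall s x x', Inv x0 x -> (forall j, x' j = phi x0 j (x j)) ->
  legal_nocross m M 0 W x s ->
  legal_nocross m M 0 W x' (map (fun p => (p.1, phi x0 p.1 p.2)) s).
Proof.
move=> m1 M1 HW; elim=> [|[i z] s IH] x x' Hinv Hx' Hl //.
case: Hl => Hp Hc Hl.
have [Hp' Hc' Hinv'] := step m1 M1 HW Hinv Hx' Hp Hc.
have Hx'' : forall j, upd x' i (phi x0 i z) j = phi x0 j (upd x i z j).
  by move=> j; rewrite /upd; case: eqP => [->|_].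
split => //; exact: (IH _ _ Hinv' Hx'' Hl).
Qed.

Arguments legal_pres {R n m M W x0}.

Lemma reach_pres (R : realFieldType) (n m M : nat) (W : 'M[R]_n) (x0 : state n) :
  (1 <= m)%N -> (1 <= M)%N -> row_stochastic W ->
  forall s x x', Inv x0 x -> (forall j, x' j = phi x0 j (x j)) ->
  legal_nocross m M 0 W x s -> reaches x s (fun x => forall j, x j = 0) ->
  reaches x' (map (fun p => (p.1, phi x0 p.1 p.2)) s)
    (fun y => forall i, (x0 i < 0 -> y i = -1) /\ (0 < x0 i -> y i = 1)).
Proof.
move=> m1 M1 HW; elim=> [|[i z] s IH] x x' Hinv Hx' Hl Hr.
- left; case: Hr => // H0 j; rewrite Hx' H0 /phi eqxx; exact: sgn_fact.
- case: Hl => Hp Hc Hl.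
  have [Hp' Hc' Hinv'] := step m1 M1 HW Hinv Hx' Hp Hc.
  have Hx'' : forall j, upd x' i (phi x0 i z) j = phi x0 j (upd x i z j).
    by move=> j; rewrite /upd; case: eqP => [->|_].
  case: Hr => [H0|Hr].
  + left => j; rewrite Hx' H0 /phi eqxx; exact: sgn_fact.
  + right; exact: (IH _ _ Hinv' Hx'' Hl Hr).
Qed.

Arguments reach_pres {R n m M W x0}.

Theorem lemma4 (R : realFieldType) (n m M : nat) (W : 'M[R]_n) (x0 : state n) :
  (0 < n)%N -> (1 <= m)%N -> (1 <= M)%N ->
  row_stochastic W ->
  (forall i, inO m M (x0 i)) ->
  (exists s, legal_nocross m M 0 W x0 s /\ reaches x0 s (fun x => forall j, x j = 0)) ->
  exists s, legal_nocross m M 0 W x0 s /\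
    reaches x0 s (fun y => forall i, (x0 i < 0 -> y i = -1) /\ (0 < x0 i -> y i = 1)).
Proof.
move=> _ m1 M1 HW _ [s [Hl Hr]].
have Hinv : Inv x0 x0 by move=> j; split; lia.
have Hx : forall j, x0 j = phi x0 j (x0 j).
  move=> j; rewrite /phi; case: eqP => // ->; rewrite /sgn; by [].
exists (map (fun p => (p.1, phi x0 p.1 p.2)) s); split.
- have := legal_pres m1 M1 HW _ _ _ Hinv Hx Hl. exact.
- exact: (reach_pres m1 M1 HW _ _ _ Hinv Hx Hl Hr).
Qed.
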